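(* Let $p,p'\ge1$ with $|p-p'|=1$, $p_{\min}=\min\{p,p'\}$, and let $S$ be a Sturmian word. A palindrome $X$ is maximal in $S$ if and only if the palindrome $a^{p_{\min}}\,b\,\alpha_{(p,p')}(X)\,a^{p_{\min}}$ is maximal in $\alpha_{(p,p')}(S)$.
   Context: $\alpha_{(p,p')}$ is the morphism $a\mapsto a^pb$, $b\mapsto a^{p'}b$. A Sturmian word is a right-infinite aperiodic word over $\{a,b\}$ with exactly $n+1$ factors of each length $n$. A palindrome is a word equal to its reverse. A palindrome $P$ is maximal in a word $W$ if $lPl'$ is a factor of $W$ for some letters $l\neq l'$ in $\{a,b\}$. *)

(* Defs.v *)
From HB Require Import structures.
From mathcomp Require Import all_boot.
Set Implicit Arguments. Unset Strict Implicit. Unset Printing Implicit Defensive.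

Inductive letter := La | Lb.

Definition letter_eqb (x y : letter) : bool :=
  match x, y with La, La | Lb, Lb => true | _, _ => false end.

Lemma letter_eqP : Equality.axiom letter_eqb.
Proof. by case; case; constructor. Qed.

HB.instance Definition _ := hasDecEq.Build letter letter_eqP.

Definition word := seq letter.
Definition iword := nat -> letter.

Definition factor (w : word) (S : iword) : Prop :=
  exists i, w = mkseq (fun k => S (i + k)) (size w).

Definition pref (S : iword) (n : nat) : word := mkseq S n.

Definition aperiodic (S : iword) : Prop :=
  ~ (exists per N, 0 < per /\ forall n, N <= n -> S (n + per) = S n).

Definition factor_complexity_n1 (S : iword) : Prop :=
  forall n, exists L : seq word,
    uniq L /\ size L = n.+1 /\
    forall w, size w = n -> (factor w S <-> w \in L).

Definition sturmian (S : iword) : Prop := aperiodic S /\ factor_complexity_n1 S.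

Definition palindrome (w : word) : Prop := rev w = w.

Definition maximal_in (P : word) (S : iword) : Prop :=
  exists l l' : letter, l <> l' /\ factor (l :: P ++ [:: l']) S.

Definition alpha_letter (p p' : nat) (x : letter) : word :=
  match x with La => rcons (nseq p La) Lb | Lb => rcons (nseq p' La) Lb end.

Definition alpha (p p' : nat) (w : word) : word :=
  flatten (map (alpha_letter p p') w).

(* image of an infinite word: the i-th letter of alpha(S) is read off
   alpha(prefix of length i+1 of S), which has length >= i+1 *)
Definition alpha_inf (p p' : nat) (S : iword) : iword :=
  fun i => nth La (alpha p p' (pref S i.+1)) i.

(* Main.v *)
Require Import Defs.
From mathcomp Require Import all_boot.
From Stdlib Require Import Classical ClassicalEpsilon.
Set Implicit Arguments. Unset Strict Implicit.

Definition occ (T : iword) (v : word) j := v = mkseq (fun k => T (j+k)) (size v).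

Lemma occP T v j : occ T v j <-> forall k, k < size v -> T (j+k) = nth La v k.
Proof.
split.
- move=> H k hk; rewrite H nth_mkseq //.
- move=> H; apply: (@eq_from_nth _ La); rewrite ?size_mkseq // => k hk.
  by rewrite nth_mkseq // H.
Qed.

Lemma occ_factor T v : factor v T <-> exists j, occ T v j.
Proof. by []. Qed.

Lemma occ_mid T u1 u2 u3 j : occ T (u1 ++ u2 ++ u3) j -> occ T u2 (j + size u1).
Proof.
move/occP=> H; apply/occP => k hk.
rewrite -addnA H; last by rewrite !size_cat ltn_add2l (leq_trans hk) // leq_addr.
by rewrite nth_cat ltnNge leq_addr /= addKn nth_cat hk.
Qed.

Lemma factor_mid T u1 u2 u3 : factor (u1 ++ u2 ++ u3) T -> factor u2 T.
Proof. by case=> j /(occ_mid (j:=j)) H; exists (j + size u1). Qed.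

Lemma occ_prefix T u v j : occ T u j -> occ T v j -> size v <= size u ->
  u = v ++ drop (size v) u.
Proof.
move=> /occP Hu /occP Hv hs.
apply: (@eq_from_nth _ La); first by rewrite size_cat size_drop subnKC.
move=> k hk; rewrite nth_cat; case: ifP => hkv; last by rewrite nth_drop subnKC // leqNgt hkv.
by rewrite -Hu ?Hv // (leq_trans hkv).
Qed.

Lemma alpha_cat p p' s t : alpha p p' (s ++ t) = alpha p p' s ++ alpha p p' t.
Proof. by rewrite /alpha map_cat flatten_cat. Qed.

Lemma alpha_cons p p' x s : alpha p p' (x :: s) = alpha_letter p p' x ++ alpha p p' s.
Proof. by []. Qed.

Lemma size_alpha_ge p p' s : size s <= size (alpha p p' s).
Proof.
elim: s => //= x s IH; rewrite alpha_cons size_cat.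
by case: x; rewrite /= size_rcons addSn ltnS (leq_trans IH) // leq_addl.
Qed.

Lemma take_pref S N M : N <= M -> take N (pref S M) = pref S N.
Proof.
move=> h; apply: (@eq_from_nth _ La).
  by rewrite size_take !size_mkseq; case: ltngtP h.
move=> k; rewrite size_take size_mkseq => hk.
have hkN : k < N by move: hk; case: ifP => // /negbT; rewrite -leqNgt => h2 /leq_trans; apply; rewrite ?(leq_trans h2).
by rewrite nth_take // !nth_mkseq // (leq_trans hkN).
Qed.

Lemma alpha_inf_nth p p' S N j : j < size (alpha p p' (pref S N)) ->
  alpha_inf p p' S j = nth La (alpha p p' (pref S N)) j.
Proof.
move=> hj; rewrite /alpha_inf.
set M := maxn N j.+1.
have e1 : pref S M = pref S N ++ drop N (pref S M)
  by rewrite -{1}(cat_take_drop N (pref S M)) take_pref // leq_maxl.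
have e2 : pref S M = pref S j.+1 ++ drop j.+1 (pref S M)
  by rewrite -{1}(cat_take_drop j.+1 (pref S M)) take_pref // leq_maxr.
have hj2 : j < size (alpha p p' (pref S j.+1)).
  by apply: leq_trans (size_alpha_ge _ _ _); rewrite size_mkseq.
have := congr1 (fun s => nth La (alpha p p' s) j) e1.
rewrite {1}e2 !alpha_cat !nth_cat hj hj2 => <-. by [].
Qed.
Definition cnt (p p' : nat) (x : letter) := match x with La => p | Lb => p' end.

Lemma alpha_letterE p p' x : alpha_letter p p' x = nseq (cnt p p' x) La ++ [:: Lb].
Proof. by case: x; rewrite /= cats1. Qed.

Lemma nth_letter p p' x k : nth La (alpha_letter p p' x) k =
  if k == cnt p p' x then Lb else La.
Proof.
rewrite alpha_letterE nth_cat size_nseq nth_nseq.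
case: ltngtP => h //.
- by case: (k - cnt p p' x) (subn_gt0 (cnt p p' x) k) => [|[|kk]] //; rewrite h.
- by rewrite h subnn.
Qed.

Lemma size_letter p p' x : size (alpha_letter p p' x) = (cnt p p' x).+1.
Proof. by rewrite alpha_letterE size_cat size_nseq addn1. Qed.

Lemma nseq_b_inj r r' (s s' : word) :
  nseq r La ++ Lb :: s = nseq r' La ++ Lb :: s' -> r = r' /\ s = s'.
Proof.
elim: r r' => [|r IH] [|r'] //=; first by case.
by case=> /IH [-> ->].
Qed.

Lemma decode p p' (hp : p != p') (Y Z rest : word) :
  alpha p p' Z = alpha p p' Y ++ rest ->
  Z = Y ++ drop (size Y) Z /\ alpha p p' (drop (size Y) Z) = rest.
Proof.
elim: Y Z => [|y Y IH] Z; first by rewrite drop0.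
case: Z => [|z Z].
  by rewrite alpha_cons alpha_letterE /= -catA; case: (nseq _ _).
rewrite !alpha_cons !alpha_letterE -!catA /= => /nseq_b_inj [hc e].
have ezy : z = y.
  by move: hc hp; case: z; case: y => //= ->; rewrite eqxx.
subst z; have [e1 e2] := IH _ e.
by split => //; rewrite {1}e1.
Qed.

Definition B p p' S t := size (alpha p p' (pref S t)).

Lemma pref_add S i n : pref S (i + n) = pref S i ++ mkseq (fun k => S (i+k)) n.
Proof.
apply: (@eq_from_nth _ La); first by rewrite size_cat !size_mkseq.
move=> k; rewrite size_mkseq => hk; rewrite nth_mkseq // nth_cat size_mkseq.
case: ltnP => h; first by rewrite nth_mkseq.
by rewrite nth_mkseq ?subnKC // -(ltn_add2l i) subnKC.
Qed.

Lemma occ_alpha p p' S u i : occ S u i ->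
  occ (alpha_inf p p' S) (alpha p p' u) (B p p' S i).
Proof.
move=> hu.
have e : pref S (i + size u) = pref S i ++ u by rewrite pref_add -hu.
apply/occP => k hk.
rewrite (@alpha_inf_nth _ _ _ (i + size u)); last by rewrite e alpha_cat size_cat /B ltn_add2l.
by rewrite e alpha_cat nth_cat /B ltnNge leq_addr /= addKn.
Qed.

Lemma occ_block p p' S t :
  occ (alpha_inf p p' S) (alpha_letter p p' (S t)) (B p p' S t).
Proof.
have := @occ_alpha p p' S [:: S t] t.
by rewrite /alpha /= cats0; apply; apply/occP => [[|k]] //; rewrite addn0.
Qed.

Lemma B_succ p p' S t : B p p' S t.+1 = B p p' S t + size (alpha_letter p p' (S t)).
Proof. by rewrite /B -addn1 pref_add alpha_cat size_cat /alpha /= cats0 addn0. Qed.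

Lemma B0 p p' S : B p p' S 0 = 0.
Proof. by []. Qed.

Lemma find_block p p' S q : exists t, B p p' S t <= q < B p p' S t.+1.
Proof.
elim: q => [|q [t /andP [h1 h2]]].
  by exists 0; rewrite B0 B_succ size_letter.
case: (ltnP q.+1 (B p p' S t.+1)) => h3.
  by exists t; rewrite h3 andbT (leq_trans h1).
exists t.+1; have e : q.+1 = B p p' S t.+1 by apply/eqP; rewrite eqn_leq h2.
by rewrite -e leqnn /= B_succ size_letter e addnS ltnS leq_addr.
Qed.

Lemma b_boundary p p' S q : alpha_inf p p' S q = Lb -> exists t, q.+1 = B p p' S t.
Proof.
have [t /andP [h1 h2]] := find_block p p' S q.
have := occ_block p p' S t; move/occP => H.
have hk : q - B p p' S t < size (alpha_letter p p' (S t)).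
  by rewrite -(ltn_add2l (B p p' S t)) subnKC // -B_succ.
have := H _ hk; rewrite subnKC // nth_letter => ->.
case: ifP => // /eqP e _; exists t.+1.
by rewrite B_succ size_letter -e addnS subnKC.
Qed.
From mathcomp Require Import zify.

Definition factb (u : word) (T : iword) : bool :=
  if excluded_middle_informative (factor u T) then true else false.

Lemma factbP u T : reflect (factor u T) (factb u T).
Proof. by rewrite /factb; case: excluded_middle_informative => h; constructor. Qed.

Definition win (T : iword) i k : word := mkseq (fun l => T (i+l)) k.

Lemma take_win T i k N : k <= N -> take k (win T i N) = win T i k.
Proof.
move=> h; apply: (@eq_from_nth _ La).
  by rewrite size_take !size_mkseq; case: ltngtP h.
move=> l; rewrite size_take size_mkseq => hl.
have hlk : l < k by move: hl; case: ifP => // /negbT; rewrite -leqNgt => h2 /leq_trans; apply; rewrite ?(leq_trans h2).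
by rewrite nth_take // !nth_mkseq // (leq_trans hlk).
Qed.

Lemma win_factor T i k : factor (win T i k) T.
Proof. by exists i; rewrite size_mkseq. Qed.

Lemma MH (T : iword) N (L : seq word) : size L <= N ->
  (forall u, size u = N -> factor u T -> u \in L) ->
  exists per M, 0 < per /\ forall m, M <= m -> T (m + per) = T m.
Proof.
move=> hL hfac.
pose Lk k := undup [seq v <- map (take k) L | (size v == k) && factb v T].
have memLk : forall k v, k <= N -> (v \in Lk k <-> size v = k /\ factor v T).
  move=> k v hk; rewrite mem_undup mem_filter; split.
    by case/andP => /andP [/eqP -> /factbP].
  case=> hs [i hi]; apply/andP; split.
    by rewrite hs eqxx /=; apply/factbP; exists i.
  have hw : win T i N \in L by apply: hfac; [rewrite size_mkseq|apply: win_factor].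
  by apply/mapP; exists (win T i N) => //; rewrite take_win // hi hs.
have uLk : forall k, uniq (Lk k) by move=> k; apply: undup_uniq.
have sLk : forall k, size (Lk k) <= N.
  move=> k; apply: leq_trans (size_undup _) _; rewrite size_filter.
  by apply: leq_trans (count_size _ _) _; rewrite size_map.
pose RE k := forall i j, win T i k = win T j k -> T (i+k) = T (j+k).
have step : forall k, k < N -> ~ RE k -> (size (Lk k)).+1 <= size (Lk k.+1).
  move=> k hk hRE.
  have [i [j [hw hne]]] : exists i j, win T i k = win T j k /\ T (i+k) <> T (j+k).
    apply: NNPP => H; apply: hRE => i j hw; apply: NNPP => hn; apply: H.
    by exists i, j.
  set x := win T i k.+1; set y := win T j k.+1.
  have hxy : x != y.
    apply/eqP => e; apply: hne; have := congr1 (fun s => nth La s k) e.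
    by rewrite /x /y !nth_mkseq.
  have hx : x \in Lk k.+1 by apply/memLk => //; split; [rewrite size_mkseq|apply: win_factor].
  have hy : y \in Lk k.+1 by apply/memLk => //; split; [rewrite size_mkseq|apply: win_factor].
  have htk : take k x = take k y by rewrite /x /y !take_win.
  have sub : {subset Lk k <= map (take k) (rem y (Lk k.+1))}.
    move=> v hv0; have [hs [i0 hi0]] := (memLk k v (ltnW hk)).1 hv0.
    have hw0 : win T i0 k.+1 \in Lk k.+1
      by apply/memLk => //; split; [rewrite size_mkseq|apply: win_factor].
    have hv : v = take k (win T i0 k.+1) by rewrite take_win // hi0 hs.
    case: (eqVneq (win T i0 k.+1) y) => e.
      apply/mapP; exists x; last by rewrite htk -e.
      by rewrite mem_rem_uniq // inE hxy hx.
    by apply/mapP; exists (win T i0 k.+1) => //; rewrite mem_rem_uniq // inE e hw0.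
  have := uniq_leq_size (uLk k) sub; rewrite size_map size_rem //.
  have : 0 < size (Lk k.+1) by case: (Lk k.+1) hy.
  by case: (size (Lk k.+1)).
have [k [hk hRE]] : exists k, k < N /\ RE k.
  apply: NNPP => H.
  have low : forall k, k <= N -> k < size (Lk k).
    elim=> [_|k IH hk].
      have : [::] \in Lk 0 by apply/memLk => //; split => //; exists 0.
      by case: (Lk 0).
    apply: leq_trans (step k hk _); first by rewrite ltnS IH // ltnW.
    by move=> hr; apply: H; exists k.
  by have := low N (leqnn N); rewrite ltnNge sLk.
pose s := map (fun t => win T t k) (iota 0 N.+1).
have nu : ~~ uniq s.
  apply/negP => us.
  have sub : {subset s <= Lk k}.
    move=> v /mapP [t _ ->]; apply/memLk; first by apply: ltnW.
    by split; [rewrite size_mkseq|apply: win_factor].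
  by have := uniq_leq_size us sub; rewrite size_map size_iota ltnNge sLk.
have [i [j [hij hj he]]] := uniqPn [::] nu.
move: he; rewrite size_map size_iota in hj.
rewrite !(nth_map 0) ?size_iota ?(ltn_trans hij) // !nth_iota ?(ltn_trans hij) // !add0n => hw.
have per : forall m, T (i+m) = T (j+m).
  elim/ltn_ind => m IH.
  case: (ltnP m k) => hm.
    by have := congr1 (fun s => nth La s m) hw; rewrite !nth_mkseq.
  have -> : i + m = (i + (m - k)) + k by lia.
  have -> : j + m = (j + (m - k)) + k by lia.
  apply: hRE; apply: (@eq_from_nth _ La); rewrite ?size_mkseq // => l hl.
  rewrite !nth_mkseq // -!addnA; apply: IH; lia.
exists (j - i), i; split; first lia.
move=> m hm.
have -> : m + (j - i) = j + (m - i) by lia.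
by rewrite -per; congr T; lia.
Qed.

Lemma recur S w : sturmian S -> factor w S -> exists i, 0 < i /\ occ S w i.
Proof.
move=> [hap hcx] hw; apply: NNPP => H.
have [L [uL [sL hL]]] := hcx (size w).
have wL : w \in L by apply/hL.
pose T : iword := fun m => S m.+1.
have [per [M [hper hP]]] : exists per M, 0 < per /\ forall m, M <= m -> T (m + per) = T m.
  apply: (@MH T (size w) (rem w L)); first by rewrite size_rem // sL.
  move=> u hu [i hi].
  have hoc : occ S u i.+1 by rewrite /occ hi size_mkseq; apply: eq_mkseq => l; rewrite /T addSn.
  have uL' : u \in L by apply/hL => //; exists i.+1.
  rewrite mem_rem_uniq // inE uL' andbT; apply/eqP => e; apply: H; exists i.+1.
  by rewrite -e.
apply: hap; exists per, M.+1; split => // n hn.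
case: n hn => [|n] // hn.
by have := hP n hn; rewrite /T addSn.
Qed.
Lemma nseqSr (x : letter) m : nseq m.+1 x = nseq m x ++ [:: x].
Proof. by elim: m => //= m ->. Qed.

Theorem lemma2 (p p' : nat) (S : iword) (X : word) :
  1 <= p -> 1 <= p' -> (p = p'.+1 \/ p' = p.+1) ->
  sturmian S -> palindrome X ->
  (maximal_in X S <->
   maximal_in (nseq (minn p p') La ++ Lb :: alpha p p' X ++ nseq (minn p p') La)
              (alpha_inf p p' S)).
Proof.
move=> hp1 hp1' hpp hS _.
set m := minn p p'.
have hc : forall x, cnt p p' x = m \/ cnt p p' x = m.+1.
  move=> x; rewrite /m; case: hpp => e; rewrite e; case: x => /=; lia.
have hinj : forall x y, cnt p p' x = cnt p p' y -> x = y.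
  move=> x y; case: hpp => e; rewrite e; case: x; case: y => //= hh; exfalso; lia.
have hpn : p != p' by apply/negP => /eqP e; have := hinj La Lb; rewrite e => /(_ erefl).
split.
- case=> l [l' [hne hf]].
  have [i [hi0 hoc]] := recur hS hf.
  case: i hi0 hoc => [|s] // _ hoc.
  have hu : occ S (S s :: l :: X ++ [:: l']) s.
    apply/occP => [[|k]] hk; first by rewrite addn0.
    by rewrite addnS -addSn; apply: ((occP _ _ _).1 hoc).
  have hf2 := ex_intro _ _ (occ_alpha p p' hu).
  have ealpha : alpha p p' (S s :: l :: X ++ [:: l']) =
     alpha_letter p p' (S s) ++ alpha_letter p p' l ++ alpha p p' X ++ alpha_letter p p' l'.
    by rewrite !alpha_cons alpha_cat /alpha /= cats0.
  rewrite ealpha in hf2.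
  have [[hl hl']|[hl hl']] : (cnt p p' l = m.+1 /\ cnt p p' l' = m) \/ (cnt p p' l = m /\ cnt p p' l' = m.+1).
    case: (hc l) (hc l') => e1 [] e2.
    + by case: hne; apply: hinj; rewrite e1 e2.
    + by right.
    + by left.
    + by case: hne; apply: hinj; rewrite e1 e2.
  + exists La, Lb; split => //.
    apply: (@factor_mid _ (alpha_letter p p' (S s)) _ [::]).
    move: hf2; rewrite !(alpha_letterE _ _ l) !(alpha_letterE _ _ l') hl hl' cats0.
    by move=> [y hy]; exists y; move: hy; rewrite /= -!catA /= -!catA.
  + exists Lb, La; split => //.
    apply: (@factor_mid _ (nseq (cnt p p' (S s)) La) _ [:: Lb]).
    move: hf2; rewrite !alpha_letterE hl hl' nseqSr.
    by move=> [y hy]; exists y; move: hy; rewrite /= -!catA /= -!catA.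
- case=> l [l' [hne [j hj]]].
  set P := nseq m La ++ Lb :: alpha p p' X ++ nseq m La in hj.
  have H := (occP _ _ _).1 hj.
  have hszP : size (l :: P ++ [:: l']) = (size (alpha p p' X) + m + m).+3.
    by rewrite /P /= !size_cat !size_nseq /= !size_cat !size_nseq; lia.
  have hq : alpha_inf p p' S (j + m.+1) = Lb.
    rewrite H; last by rewrite hszP; lia.
    by rewrite /= /P -catA nth_cat size_nseq ltnn subnn.
  have [t ht] := b_boundary hq.
  case: t ht => [|s] ht; first by rewrite B0 in ht.
  have hBs := B_succ p p' S s; rewrite size_letter -ht in hBs.
  have hleft : l = if cnt p p' (S s) == m then Lb else La.
    case: (hc (S s)) => e; rewrite e in hBs.
    + rewrite e eqxx.
      case: s ht hBs e => [|s'] ht hBs e; first by rewrite B0 in hBs; lia.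
      have hBs' := B_succ p p' S s'; rewrite size_letter in hBs'.
      have := (occP _ _ _).1 (occ_block p p' S s') (cnt p p' (S s')).
      rewrite size_letter ltnSn nth_letter eqxx => /(_ erefl).
      have -> : B p p' S s' + cnt p p' (S s') = j + 0 by lia.
      by rewrite H // hszP.
    + rewrite e (gtn_eqF (ltnSn _)).
      have := (occP _ _ _).1 (occ_block p p' S s) 0.
      rewrite size_letter nth_letter e => /(_ erefl).
      have -> : B p p' S s + 0 = j + 0 by lia.
      by rewrite H // hszP.
  set v := alpha p p' X ++ nseq m La ++ [:: l'].
  have hv : occ (alpha_inf p p' S) v (B p p' S s.+1).
    have e : l :: P ++ [:: l'] = (l :: nseq m La ++ [:: Lb]) ++ v ++ [::].
      by rewrite cats0 /P /v /= -!catA /= -!catA.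
    rewrite e in hj; have := occ_mid hj.
    rewrite /= size_cat size_nseq -ht.
    by rewrite /= addn1 addnS.
  set Z := win S s.+1 (size v).
  have hZ : occ S Z s.+1 by rewrite /occ /Z size_mkseq.
  have hpre := occ_prefix (occ_alpha p p' hZ) hv.
  have hsz : size v <= size (alpha p p' Z).
    by apply: leq_trans (size_alpha_ge _ _ _); rewrite size_mkseq.
  have := hpre hsz; rewrite /v -!catA => /(decode hpn) [eZ].
  case eD: (drop (size X) Z) => [|z Z'']; first by case: (m).
  rewrite alpha_cons alpha_letterE => eA.
  have hright : l' = if cnt p p' z == m then Lb else La.
    have := congr1 (fun w => nth La w m) eA.
    case: (hc z) => e; rewrite e.
    + by rewrite eqxx /= -catA !nth_cat size_nseq ltnn subnn.
    + rewrite (gtn_eqF (ltnSn _)) /= -catA !nth_cat size_nseq ltnn subnn.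
      by rewrite -cat_cons -[La :: nseq m La]/(nseq m.+1 La) nth_cat size_nseq ltnSn nth_nseq ltnSn.
  rewrite eD in eZ.
  exists (S s), z; split.
    by move=> e; apply: hne; rewrite hleft hright e.
  exists s; apply/occP => [[|k]] hk; first by rewrite addn0.
  rewrite -addSnnS.
  have hkZ : k < size Z by rewrite eZ size_cat /=; move: hk; rewrite /= size_cat /=; lia.
  have := (occP _ _ _).1 hZ k hkZ => ->.
  rewrite eZ /= !nth_cat; case: ltnP => // h.
  by have -> : k - size X = 0 by move: hk; rewrite /= size_cat /=; lia.
Qed.
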